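(* For all $x,y\in\mathbb{B}^2$ with $x\neq y$, the lower bound for $\tilde\tau_{\mathbb{B}^2}(x,y)$ in the following piecewise form, $$L(x,y)=\begin{cases}\log\Big(1+2\sqrt{\frac{|x-y|\sqrt{|x+y|^2+|x-y|^2}}{4-|x+y|^2-|x-y|^2}}\Big), & \text{if } |x+y|\Big(1+\frac{4}{|x+y|^2+|x-y|^2}\Big)\le4,\\[2mm] \log\Big(1+\frac{2|x-y|}{\sqrt{(2-|x+y|)^2+|x-y|^2}}\Big), & \text{otherwise},\end{cases}$$ satisfies $$L(x,y)\ge\log\Big(1+\frac{2|x-y|}{\sqrt{4-|x-y|^2}}\Big).$$
   Context: $\mathbb{B}^2$ is the open unit disk in $\mathbb{R}^2$; $|\cdot|$ is the Euclidean norm. *)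

(* Defs.v *)
From Stdlib Require Import Reals Lra.
Open Scope R_scope.

Definition pt : Type := (R * R)%type.

Definition enorm (p : pt) : R := sqrt (fst p ^ 2 + snd p ^ 2).

Definition padd (p q : pt) : pt := (fst p + fst q, snd p + snd q).
Definition psub (p q : pt) : pt := (fst p - fst q, snd p - snd q).

Definition in_unit_disk (p : pt) : Prop := enorm p < 1.

Definition L_bound (x y : pt) : R :=
  let s := enorm (padd x y) in
  let d := enorm (psub x y) in
  if Rle_dec (s * (1 + 4 / (s ^ 2 + d ^ 2))) 4
  then ln (1 + 2 * sqrt (d * sqrt (s ^ 2 + d ^ 2) / (4 - s ^ 2 - d ^ 2)))
  else ln (1 + 2 * d / sqrt ((2 - s) ^ 2 + d ^ 2)).

(* Main.v *)
Require Import Defs.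
From Stdlib Require Import Reals Lra Psatz.
Open Scope R_scope.

Lemma c2_ineq (s d : R) : 0 <= s -> 0 < d -> s^2 + d^2 < 4 ->
  s * ((s^2+d^2) + 4) > 4 * (s^2+d^2) -> (2 - s)^2 + d^2 <= 4 - d^2.
Proof.
  intros Hs Hd Ht H.
  assert (Hs2 : s < 2) by nra.
  assert (H1 : (s^2+d^2) * (4 - s) < 4 * s) by nra.
  assert (H2 : 2 * (s^2+d^2) * (4 - s) <= (s^2 + 4*s) * (4 - s)) by nra.
  assert (H3 : 2 * (s^2+d^2) <= s^2 + 4*s).
  { apply (Rmult_le_reg_r (4 - s)); lra. }
  nra.
Qed.

Lemma sq_lt1 (z : R) : 0 <= z -> sqrt z < 1 -> z < 1.
Proof.
  intros Hz H. destruct (Rlt_or_le z 1) as [h|h]; auto.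
  apply sqrt_le_1_alt in h. rewrite sqrt_1 in h. lra.
Qed.

Lemma ln_le' (u v : R) : 0 < u -> u <= v -> ln u <= ln v.
Proof.
  intros Hu H. destruct (Rle_lt_or_eq_dec _ _ H) as [h|h].
  - left; apply ln_increasing; auto.
  - subst; lra.
Qed.

Theorem mainTheorem7 (x y : pt) :
  in_unit_disk x -> in_unit_disk y -> x <> y ->
  L_bound x y >= ln (1 + 2 * enorm (psub x y) / sqrt (4 - enorm (psub x y) ^ 2)).
Proof.
  destruct x as [a b]; destruct y as [c e].
  unfold in_unit_disk, L_bound, enorm, padd, psub; simpl fst; simpl snd.
  intros Hx Hy Hne.
  apply sq_lt1 in Hx; [|nra]. apply sq_lt1 in Hy; [|nra].
  assert (HD : 0 < (a - c)^2 + (b - e)^2).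
  { destruct (Req_dec a c) as [->|hac].
    - destruct (Req_dec b e) as [->|hbe]; [congruence|].
      assert (h : 0 < Rsqr (b-e)) by (apply Rsqr_pos_lt; intro; apply hbe; lra). unfold Rsqr in h. pose proof (pow2_ge_0 (c-c)). replace ((b-e)^2) with ((b-e)*(b-e)) by ring. lra.
    - assert (h : 0 < Rsqr (a-c)) by (apply Rsqr_pos_lt; intro; apply hac; lra). unfold Rsqr in h. pose proof (pow2_ge_0 (b-e)). replace ((a-c)^2) with ((a-c)*(a-c)) by ring. lra. }
  assert (HS0 : 0 <= (a + c)^2 + (b + e)^2).
  { pose proof (pow2_ge_0 (a+c)). pose proof (pow2_ge_0 (b+e)). lra. }
  assert (Ht : (a + c)^2 + (b + e)^2 + ((a - c)^2 + (b - e)^2) < 4).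
  { replace ((a + c)^2 + (b + e)^2 + ((a - c)^2 + (b - e)^2)) with (2 * (a^2+b^2) + 2*(c^2+e^2)) by ring. lra. }
  remember ((a + c)^2 + (b + e)^2) as Sp eqn:HSp.
  remember ((a - c)^2 + (b - e)^2) as Dm eqn:HDm.
  clear HSp HDm Hx Hy Hne a b c e.
  assert (Hs2 : sqrt Sp ^2 = Sp) by (apply pow2_sqrt; lra).
  assert (Hd2 : sqrt Dm ^2 = Dm) by (apply pow2_sqrt; lra).
  assert (Hs0 : 0 <= sqrt Sp) by apply sqrt_pos.
  assert (Hd0 : 0 < sqrt Dm) by (apply sqrt_lt_R0; lra).
  remember (sqrt Sp) as s eqn:Hs. remember (sqrt Dm) as d eqn:Hd.
  rewrite Hs2, Hd2.
  assert (H4d : 0 < 4 - Dm) by lra.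
  assert (Hsq4 : 0 < sqrt (4 - Dm)) by (apply sqrt_lt_R0; lra).
  apply Rle_ge.
  destruct (Rle_dec (s * (1 + 4 / (Sp + Dm))) 4) as [H1|H1].
  - apply ln_le'.
    + assert (0 < 2 * d / sqrt (4 - Dm)) by (apply Rdiv_lt_0_compat; lra). lra.
    + apply Rplus_le_compat_l.
      assert (E : 2 * d / sqrt (4 - Dm) = 2 * sqrt (Dm / (4 - Dm))).
      { rewrite sqrt_div_alt; [|lra]. rewrite Hd. field. lra. }
      rewrite E. apply Rmult_le_compat_l; [lra|]. apply sqrt_le_1_alt.
      assert (Hst : d <= sqrt (Sp + Dm)) by (rewrite Hd; apply sqrt_le_1_alt; lra).
      apply (Rmult_le_reg_r ((4 - Dm) * (4 - (Sp + Dm)))); [nra|].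
      unfold Rdiv. replace (Dm * / (4 - Dm) * ((4 - Dm) * (4 - (Sp + Dm))))
        with (Dm * (4 - (Sp+Dm))) by (field; lra).
      replace (d * sqrt (Sp + Dm) * / (4 - Sp - Dm) * ((4 - Dm) * (4 - (Sp + Dm))))
        with (d * sqrt (Sp + Dm) * (4 - Dm)) by (field; lra).
      replace (Dm * (4 - (Sp+Dm))) with (d*d*(4-(Sp+Dm))) by (rewrite <- Hd2; ring).
      apply Rmult_le_compat; try lra.
      all: try (apply Rmult_le_0_compat; lra).
      all: try (apply Rmult_le_compat_l; lra).
  - apply ln_le'.
    + assert (0 < 2 * d / sqrt (4 - Dm)) by (apply Rdiv_lt_0_compat; lra). lra.
    + apply Rplus_le_compat_l.
      assert (Hc : (2 - s)^2 + Dm <= 4 - Dm).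
      { rewrite <- Hd2. apply c2_ineq; try lra; rewrite ?Hs2, ?Hd2; try lra.
        apply Rnot_le_gt in H1.
        replace (s * (Sp + Dm + 4)) with (s * (1 + 4 / (Sp + Dm)) * (Sp + Dm)) by (field; lra).
        nra. }
      assert (Hp : 0 < sqrt ((2 - s)^2 + Dm)) by (apply sqrt_lt_R0; nra).
      unfold Rdiv. repeat rewrite Rmult_assoc. apply Rmult_le_compat_l; [lra|].
      apply Rmult_le_compat_l; [lra|].
      apply Rinv_le_contravar; [lra|]. apply sqrt_le_1_alt; lra.
Qed.
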